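(* Let $X$ be a topological space and let $\mathcal C=\mathcal C(\mathcal A)$ be the epireflective subcategory of $\mathbf{Top}$ generated by a class of spaces $\mathcal A$. If $A$ is an $\mathcal A$-embedded subspace of $X$, then the epireflection functor associated to $\mathcal C$ preserves the subspace $A\hookrightarrow X$.
   Context: $\mathcal C(\mathcal A)$ is the class of spaces homeomorphic to subspaces of products of spaces in $\mathcal A$; each space $Z$ has a reflection $\mathrm{r}_{\mathcal C}Z\in\mathcal C$ with a universal continuous surjection $\mathrm{r}_{(Z,\mathcal C)}\colon Z\to\mathrm{r}_{\mathcal C}Z$, and $\mathrm{r}_{\mathcal C}(f)$ denotes the induced map of a continuous $f$. The epireflection preserves the subspace $A\hookrightarrow X$ (inclusion $i$) if $\mathrm{r}_{\mathcal C}(i)\colon\mathrm{r}_{\mathcal C}A\to\mathrm{r}_{\mathcal C}X$ is a homeomorphism onto a subspace of $\mathrm{r}_{\mathcal C}X$. A subset $A$ of $X$ is $\mathcal A$-embedded if for every continuous $f\colon A\to Z$ with $Z\in\mathcal A$ there exist $Y\in\mathcal A$ with $Z\subseteq Y$ and a continuous $\overline f\colon X\to Y$ with $\overline f|_A=f$. *)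

(* Defs.v *)
From HB Require Import structures.
From mathcomp Require Import all_boot all_algebra.
From mathcomp Require Import all_classical all_reals topology.
Set Implicit Arguments. Unset Strict Implicit. Unset Printing Implicit Defensive.
Local Open Scope classical_set_scope.

Definition space_class := topologicalType -> Prop.

Definition embedding {S T : topologicalType} (e : S -> T) : Prop :=
  injective e /\ continuous e /\
  (forall U : set S, open U -> exists V : set T, open V /\ U = e @^-1` V).

Definition in_C (cA : space_class) (Z : topologicalType) : Prop :=
  exists (I : Type) (T : I -> topologicalType)
         (e : Z -> prod_topology (fun i => T i)),
    (forall i, cA (T i)) /\ embedding e.

Definition is_reflection (cA : space_class) (Z R : topologicalType)
  (r : Z -> R) : Prop :=
  in_C cA R /\ continuous r /\ (forall y : R, exists x : Z, r x = y) /\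
  (forall (W : topologicalType) (g : Z -> W), in_C cA W -> continuous g ->
     exists! h : R -> W, continuous h /\ h \o r = g).

(* A (a subset of X, with the subspace topology on [set_type A]) is
   𝒜-embedded in X. "Z ⊆ Y" is read as: Z is a subspace of Y via an embedding e. *)
Definition A_embedded (cA : space_class) (X : topologicalType) (A : set X)
  : Prop :=
  forall (Z : topologicalType) (f : set_type A -> Z), cA Z -> continuous f ->
    exists (Y : topologicalType) (e : Z -> Y) (fb : X -> Y),
      cA Y /\ embedding e /\ continuous fb /\
      (forall a : set_type A, fb (set_val a) = e (f a)).

(* Main.v *)
Require Import Defs.
From HB Require Import structures.
From mathcomp Require Import all_boot all_algebra.
From mathcomp Require Import all_classical all_reals topology.
Local Open Scope classical_set_scope.

Lemma prod_cvg {I : Type} (K : I -> topologicalType)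
  (G : set_system (prod_topology K)) (q : prod_topology K) :
  Filter G -> (forall i (V : set (K i)), nbhs (q i) V -> G ((fun f => f i) @^-1` V)) ->
  forall U, nbhs q U -> G U.
Proof.
move=> FG HG; have : G --> q; last by move=> H U /H.
apply/cvg_sup => i A /=.
rewrite (@nbhsE (Topological.Pack _)) => -[B [oB Bq] BA].
case: oB => C oC CB.
apply: filterS BA _; rewrite -CB; apply: HG; apply: open_nbhs_nbhs; split => //.
by rewrite -CB in Bq.
Qed.

Lemma proj_cont {I : Type} (K : I -> topologicalType) (i : I) :
  continuous (fun f : prod_topology K => f i).
Proof. exact: (@proj_continuous {classic I} K i). Qed.

Lemma initial_up (S T : topologicalType) (f : S -> T) (G : set_system S) :
  (forall U, open U -> exists V, open V /\ U = f @^-1` V) ->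
  (forall P Q, P `<=` Q -> G P -> G Q) ->
  forall x, (forall V, nbhs (f x) V -> G (f @^-1` V)) ->
  forall U, nbhs x U -> G U.
Proof.
move=> init GS x H U; rewrite nbhsE => -[B [oB Bx] BU].
have [V [oV BV]] := init B oB; rewrite BV in Bx BU.
apply: GS BU _; apply: H; apply: open_nbhs_nbhs; split => //.
Qed.

Lemma cA_inC (cA : space_class) (Y : topologicalType) : cA Y -> in_C cA Y.
Proof.
move=> cAY; exists unit, (fun _ => Y), (fun y _ => y); split => //.
split; first by move=> a b /(congr1 (fun f => f tt)).
split.
  move=> y U HU.
  apply: (@prod_cvg unit (fun _ => Y) ((fun y0 : Y => fun _ : unit => y0) @ nbhs y) _ _ _ U HU) => i V HV //.
move=> U oU; exists ((fun f : prod_topology (fun _ : unit => Y) => f tt) @^-1` U).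
split => //; move/continuousP: (@proj_cont unit (fun _ => Y) tt); exact.
Qed.

Theorem corollary5p6 (cA : space_class) (X : topologicalType) (A : set X)
  (RA RX : topologicalType) (rA : set_type A -> RA) (rX : X -> RX) :
  A_embedded cA A ->
  is_reflection cA rA -> is_reflection cA rX ->
  forall h : RA -> RX, continuous h -> h \o rA = rX \o set_val ->
    embedding h.
Proof.
move=> Aemb [[I [T [e [TA [einj [econt eop]]]]]] [rAc [rAsurj _]]].
move=> [RXC [rXc [_ rXuniv]]] h hc hcomp.
have key : forall i, exists (Y : topologicalType) (ei : T i -> Y) (g : RX -> Y),
    embedding ei /\ continuous g /\ forall z, g (h z) = ei (e z i).
  move=> i.
  have fc : continuous (fun a => e (rA a) i).
    move=> a; apply: (@continuous_comp _ _ _ rA (fun r => e r i)); first exact: rAc.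
    apply: (@continuous_comp _ _ _ e (fun f => f i)); first exact: econt.
    exact: proj_cont.
  have [Y [ei [fb [cAY [eiemb [fbc fbeq]]]]]] := Aemb (T i) _ (TA i) fc.
  have [g [[gc gcomp] _]] := rXuniv Y fb (@cA_inC cA Y cAY) fbc.
  exists Y, ei, g; split => //; split => // z.
  have [a <-] := rAsurj z.
  have -> : h (rA a) = rX (set_val a) by exact: (congr1 (fun F => F a) hcomp).
  by rewrite -fbeq -gcomp.
split.
  move=> x y hxy; apply: einj; apply: functional_extensionality_dep => i.
  have [Y [ei [g [[eiinj _] [_ geq]]]]] := key i.
  by apply: eiinj; rewrite -!geq hxy.
split => //.
have claim : forall U, open U -> forall s, U s ->
    exists W, open W /\ W (h s) /\ h @^-1` W `<=` U.
  move=> U oU s Us.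
  pose G := [set P : set RA | exists W, open W /\ W (h s) /\ h @^-1` W `<=` P].
  have GS : forall P Q, P `<=` Q -> G P -> G Q.
    move=> P Q PQ [W [oW [Ws WP]]]; exists W; split => //; split => //.
    exact: subset_trans PQ.
  apply: (@initial_up _ _ e G eop GS s); last first.
    by apply: open_nbhs_nbhs; split.
  pose G' := [set P | G (e @^-1` P)].
  have FG' : Filter G'.
    split.
    - by exists setT; split; [exact: openT | split].
    - move=> P Q [W1 [oW1 [W1s W1P]]] [W2 [oW2 [W2s W2Q]]].
      exists (W1 `&` W2); split; first exact: openI.
      by split => // z [/W1P ? /W2Q ?].
    - move=> P Q PQ [W [oW [Ws WP]]]; exists W; split => //; split => //.
      by move=> z /WP /PQ.
  move=> V HV; apply: (@prod_cvg I T G' (e s) FG' _ V HV) => i V' HV'.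
  have [Y [ei [g [[_ [_ eiop]] [gc geq]]]]] := key i.
  pose G'' := [set P | G ((fun z => e z i) @^-1` P)].
  have GS'' : forall P Q, P `<=` Q -> G'' P -> G'' Q.
    move=> P Q PQ; apply: GS => z /PQ //.
  apply: (@initial_up _ _ ei G'' eiop GS'' _ _ V' HV') => V'' HV''.
  rewrite -geq in HV''.
  have := gc (h s) _ HV''; rewrite nbhsE => -[B [oB Bhs] BV].
  exists B; split => //; split => // z Bz /=.
  by rewrite -geq; apply: BV.
move=> U oU.
pose WW := [set W : set RX | open W /\ h @^-1` W `<=` U].
exists (\bigcup_(W in WW) W); split.
  by apply: bigcup_open => W [].
rewrite eqEsubset; split.
  move=> s Us; have [W [oW [Ws WU]]] := claim U oU s Us.
  by exists W.
by move=> s [W [_ WU] Ws]; apply: WU.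
Qed.
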